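(* Fix $n\ge1$. A point $H\in\mathcal H$ belongs to $\mathcal S_n=\{H\in\mathcal H: X_n(H)=0,\ H^{(n)}=z^n\}$ if and only if $z^n\cdot\mathcal H_+\subset\mathcal H_+$, i.e. multiplication by $z^n$ maps the span $\mathcal H_+$ of the series $H^{(0)},H^{(1)},\dots$ of that point into itself.
   Context: Let $z$ be a formal variable and $\mathcal L$ the space of formal Laurent series $\sum_{j\le N} l_j z^j$ (finitely many positive powers of $z$). Let $\mathcal H$ be the set of sequences $H=(H^{(k)})_{k\ge0}$ of elements of $\mathcal L$ with $H^{(0)}=1$ and, for $k\ge1$, $H^{(k)}=z^k+\sum_{l\ge1}H^k_l z^{-l}$; the coefficients $H^k_l$ are coordinates on $\mathcal H$, and we set $H^0_l=0$. The central system (CS) is the family of vector fields $X_j$, $j\ge1$, on $\mathcal H$, with associated times $t_j$, defined by $$\frac{\partial H^{(k)}}{\partial t_j}=H^{(j+k)}-H^{(j)}H^{(k)}+\sum_{l=1}^{k}H^j_lH^{(k-l)}+\sum_{l=1}^{j}H^k_lH^{(j-l)},\qquad k\ge0;$$ the right-hand side contains only negative powers of $z$, so this determines the components $X_j(H^k_l)$. For $H\in\mathcal H$ let $\mathcal H_+=\mathrm{span}\{H^{(k)}:k\ge0\}$ (finite linear combinations). *)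

(* Defs.v *)
From mathcomp Require Import all_boot all_order all_algebra.
Set Implicit Arguments. Unset Strict Implicit. Unset Printing Implicit Defensive.
Import Order.TTheory GRing.Theory Num.Theory.
Local Open Scope ring_scope.

(* A formal Laurent series  sum_{d <= N} l_d z^d  is represented by its
   coefficient function  d : int |-> l_d. *)
Definition laurent (R : fieldType) := int -> R.

(* A point H of the space \mathcal H is given by its coordinates
   c k l = H^k_l  (only the values with k >= 1, l >= 1 are used). *)
Definition coords (R : fieldType) := nat -> nat -> R.

(* The series H^(k):  H^(0) = 1,  H^(k) = z^k + sum_{l>=1} H^k_l z^{-l}. *)
Definition Hser (R : fieldType) (c : coords R) (k : nat) : laurent R :=
  fun d => if k == 0%N then (d == 0)%:R
           else (d == k%:Z)%:R + (if d < 0 then c k (absz d) else 0).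

(* The coordinate H^k_l, i.e. the coefficient of z^{-l} in H^(k)
   (so that H^0_l = 0 for l >= 1, as in the paper). *)
Definition Hc (R : fieldType) (c : coords R) (k l : nat) : R :=
  Hser c k (- (l%:Z)).

(* Product of two Laurent series a, b with a_i = 0 for i > N1 and
   b_i = 0 for i > N2:  (ab)_d = sum_{i = d - N2}^{N1} a_i b_{d-i}
   (a finite sum; it is empty / zero when d > N1 + N2). *)
Definition lmul (R : fieldType) (N1 N2 : nat) (a b : laurent R) : laurent R :=
  fun d => \sum_(t < (absz (N1%:Z + N2%:Z - d)%R).+1)
             a (N1%:Z - t%:Z) * b (d - N1%:Z + t%:Z).

(* Right-hand side of the central system:
   dH^(k)/dt_j = H^(j+k) - H^(j)H^(k) + sum_{l=1}^k H^j_l H^(k-l)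
                 + sum_{l=1}^j H^k_l H^(j-l).
   (H^(j) has no coefficient above degree j.) *)
Definition CSrhs (R : fieldType) (c : coords R) (j k : nat) : laurent R :=
  fun d => Hser c (j + k) d - lmul j k (Hser c j) (Hser c k) d
           + \sum_(1 <= l < k.+1) Hc c j l * Hser c (k - l) d
           + \sum_(1 <= l < j.+1) Hc c k l * Hser c (j - l) d.

Definition Xcomp (R : fieldType) (c : coords R) (j k l : nat) : R :=
  CSrhs c j k (- (l%:Z)).

Definition X_vanishes (R : fieldType) (c : coords R) (j : nat) : Prop :=
  forall k l : nat, (1 <= k)%N -> (1 <= l)%N -> Xcomp c j k l = 0.

Definition in_Sn (R : fieldType) (n : nat) (c : coords R) : Prop :=
  X_vanishes c n /\ Hser c n = (fun d : int => (d == n%:Z)%:R).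

Definition in_Hplus (R : fieldType) (c : coords R) (f : laurent R) : Prop :=
  exists (m : nat) (a : nat -> R),
    f = (fun d => \sum_(k < m) a k * Hser c k d).

Definition zpow_mul (R : fieldType) (n : nat) (f : laurent R) : laurent R :=
  fun d => f (d - n%:Z).

(* Main.v *)
Require Import Defs.
From mathcomp Require Import all_boot all_order all_algebra.
From mathcomp Require Import zify.
From Stdlib Require Import FunctionalExtensionality.
Set Implicit Arguments. Unset Strict Implicit.
Import Order.TTheory GRing.Theory Num.Theory.
Local Open Scope ring_scope.

Lemma Hnn (R : fieldType) (c : coords R) j (e : nat) :
  Hser c j (Posz e) = (e == j)%:R.
Proof.
rewrite /Hser; case: j => [|j] /=; first by [].
by rewrite addr0.
Qed.

Lemma Hneg (R : fieldType) (c : coords R) j (l : nat) :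
  Hser c j (- l%:Z) = Hc c j l.
Proof. by []. Qed.

Lemma sumC (R : fieldType) (c : coords R) (m : nat) (a : nat -> R) (e : nat) :
  \sum_(j < m) a j * Hser c j (Posz e) = if (e < m)%N then a e else 0.
Proof.
elim: m => [|m IH]; first by rewrite big_ord0.
rewrite big_ord_recr /= IH Hnn.
have [Hlt|Hge] := ltnP e m.
  have /negbTE -> : (e != m) by lia.
  have -> : (e < m.+1)%N by lia.
  by rewrite mulr0 addr0.
case: (eqVneq e m) => [->|Hne].
  by rewrite ltnSn mulr1 add0r.
have -> : (e < m.+1)%N = false by lia.
by rewrite mulr0 addr0.
Qed.

Lemma Rep (R : fieldType) (c : coords R) (m M : nat) (a : nat -> R) (f : laurent R) :
  f = (fun d => \sum_(k < m) a k * Hser c k d) -> (m <= M)%N ->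
  f = (fun d => \sum_(k < M) f (Posz k) * Hser c k d).
Proof.
move=> Hf HmM; apply: functional_extensionality => d.
have Hv : forall k : nat, f (Posz k) = if (k < m)%N then a k else 0.
  by move=> k; rewrite Hf sumC.
rewrite {1}Hf (big_ord_widen M (fun k => a k * Hser c k d)) // big_mkcond /=.
apply: eq_bigr => k _; rewrite Hv; by case: ifP; rewrite ?mul0r.
Qed.

Lemma Uniq (R : fieldType) (c : coords R) (f g : laurent R) :
  in_Hplus c f -> in_Hplus c g -> (forall e : nat, f (Posz e) = g (Posz e)) -> f = g.
Proof.
move=> [m1 [a1 H1]] [m2 [a2 H2]] He.
rewrite (Rep (M := (m1 + m2)%N) H1) ?leq_addr // (Rep (M := (m1 + m2)%N) H2) ?leq_addl //.
by apply: functional_extensionality => d; apply: eq_bigr => k _; rewrite He.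
Qed.

Lemma inH0 (R : fieldType) (c : coords R) : in_Hplus c (fun _ => 0).
Proof. exists 0%N, (fun _ => 0); apply: functional_extensionality => d; by rewrite big_ord0. Qed.

Lemma inHD (R : fieldType) (c : coords R) (f g : laurent R) :
  in_Hplus c f -> in_Hplus c g -> in_Hplus c (fun d => f d + g d).
Proof.
move=> [m1 [a1 H1]] [m2 [a2 H2]].
exists (m1 + m2)%N, (fun k => f (Posz k) + g (Posz k)).
apply: functional_extensionality => d.
rewrite {1}(Rep (M := (m1 + m2)%N) H1) ?leq_addr // {1}(Rep (M := (m1 + m2)%N) H2) ?leq_addl //.
by rewrite -big_split /=; apply: eq_bigr => k _; rewrite mulrDl.
Qed.

Lemma inHZ (R : fieldType) (c : coords R) (s : R) (f : laurent R) :
  in_Hplus c f -> in_Hplus c (fun d => s * f d).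
Proof.
move=> [m [a H]]; exists m, (fun k => s * a k).
apply: functional_extensionality => d; rewrite H mulr_sumr.
by apply: eq_bigr => k _; rewrite mulrA.
Qed.

Lemma inHH (R : fieldType) (c : coords R) (j : nat) : in_Hplus c (Hser c j).
Proof.
exists j.+1, (fun i => (i == j)%:R); apply: functional_extensionality => d.
rewrite big_ord_recr /= eqxx mul1r big1 ?add0r // => i _.
have /negbTE -> : (nat_of_ord i != j) by have := ltn_ord i; lia.
by rewrite mul0r.
Qed.

Lemma inHsum (R : fieldType) (c : coords R) (T : Type) (r : seq T) (F : T -> laurent R) :
  (forall i, in_Hplus c (F i)) -> in_Hplus c (fun d => \sum_(i <- r) F i d).
Proof.
move=> HF; elim: r => [|x r IH].
  have -> : (fun d : int => \sum_(i <- [::]) F i d) = (fun _ => 0) by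
    apply: functional_extensionality => d; rewrite big_nil.
  exact: inH0.
have -> : (fun d : int => \sum_(i <- x :: r) F i d) = (fun d => F x d + \sum_(i <- r) F i d)
  by apply: functional_extensionality => d; rewrite big_cons.
exact: inHD.
Qed.

Definition G (R : fieldType) (c : coords R) (n k : nat) : laurent R :=
  fun d => Hser c (n + k) d + \sum_(1 <= l < n.+1) Hc c k l * Hser c (n - l) d.

Lemma sum_delta (R : fieldType) (lo hi x : nat) (F : nat -> R) :
  \sum_(lo <= l < hi) F l * (x == l)%:R = if (lo <= x < hi)%N then F x else 0.
Proof.
case: ifP => Hx.
  rewrite (bigD1_seq x) ?mem_index_iota ?iota_uniq //= eqxx mulr1 big1 ?addr0 //.
  by move=> i /negbTE; rewrite eq_sym => ->; rewrite mulr0.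
rewrite big1_seq // => i /andP[_]; rewrite mem_index_iota => Hi.
have /negbTE -> : x != i by apply/eqP => E; move: Hx; rewrite E Hi.
by rewrite mulr0.
Qed.

Lemma Dnn (R : fieldType) (c : coords R) (n k e : nat) :
  zpow_mul n (Hser c k) (Posz e) = G c n k (Posz e).
Proof.
rewrite /zpow_mul /G Hnn.
have [Hge|Hlt] := leqP n e.
  have -> : Posz e - Posz n = Posz (e - n) by lia.
  rewrite Hnn big_nat_cond big1 ?addr0.
    by congr (_%:R); rewrite -(eqn_add2l n) subnKC.
  move=> l /andP[/andP[H1 H2] _]; rewrite Hnn.
  have /negbTE -> : (e != n - l)%N by lia.
  by rewrite mulr0.
have -> : Posz e - Posz n = - Posz (n - e) by lia.
rewrite Hneg.
have /negbTE -> : (e != n + k)%N by lia.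
rewrite add0r.
rewrite (eq_big_nat _ _ (F2 := fun l => Hc c k l * ((n - e)%N == l)%:R)).
  rewrite sum_delta; have -> : (1 <= n - e < n.+1)%N by lia. by [].
move=> l Hl; rewrite Hnn; congr (_ * _%:R).
case: (eqVneq e (n - l)%N) => [E|E].
  by apply/esym/eqP; lia.
have: ((n - e)%N != l) by move/eqP: E; lia.
by move/negbTE ->.
Qed.

Lemma XG (R : fieldType) (c : coords R) (n k l : nat) :
  (1 <= n)%N -> Hser c n = (fun d => (d == n%:Z)%:R) ->
  Xcomp c n k l = G c n k (- l%:Z) - zpow_mul n (Hser c k) (- l%:Z).
Proof.
move=> Hn1 Hn.
have Hl : lmul n k (Hser c n) (Hser c k) (- l%:Z) = Hser c k (- l%:Z - n%:Z).
  rewrite /lmul Hn big_ord_recl /=.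
  have -> : (n%:Z - 0%N%:Z == n%:Z) = true by apply/eqP; lia.
  rewrite mul1r big1 ?addr0.
    by congr (Hser c k); lia.
  move=> t _; rewrite /bump leq0n add1n.
  have /negbTE -> : (n%:Z - (t.+1)%:Z != n%:Z) by apply/eqP; lia.
  by rewrite mul0r.
have Hm : \sum_(1 <= l' < k.+1) Hc c n l' * Hser c (k - l') (- l%:Z) = 0.
  rewrite big_nat_cond big1 // => l' /andP[/andP[H1 H2] _].
  rewrite /Hc Hn.
  have /negbTE -> : (- l'%:Z != n%:Z) by apply/eqP; lia.
  by rewrite mul0r.
rewrite /Xcomp /CSrhs Hl Hm addr0 /G /zpow_mul.
by rewrite addrAC.
Qed.

Lemma inG (R : fieldType) (c : coords R) (n k : nat) : in_Hplus c (G c n k).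
Proof.
apply: (inHD (inHH c (n + k))).
apply: (@inHsum _ c _ _ (fun l d => Hc c k l * Hser c (n - l) d)) => l.
exact: inHZ (inHH c _).
Qed.

Lemma Gfull (R : fieldType) (c : coords R) (n k : nat) :
  (1 <= n)%N -> in_Sn n c -> zpow_mul n (Hser c k) = G c n k.
Proof.
move=> Hn1 [HX Hn]; apply: functional_extensionality => d.
case: d => [e|e]; first exact: Dnn.
rewrite NegzE.
apply/eqP; rewrite eq_sym -subr_eq0; apply/eqP.
case: k => [|k].
  rewrite /G /zpow_mul big_nat_cond big1 ?addr0.
    rewrite addn0 Hn /Hser /=.
    have /negbTE -> : (- (e.+1)%:Z - n%:Z != 0) by apply/eqP; lia.
    by rewrite subr0.
  move=> l /andP[/andP[H1 H2] _]; rewrite /Hc /Hser /=.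
  have /negbTE -> : (- l%:Z != 0) by apply/eqP; lia.
  by rewrite mul0r.
by rewrite -XG // HX.
Qed.

Theorem mainTheorem7 (R : fieldType) (n : nat) (c : coords R) :
  (1 <= n)%N ->
  (in_Sn n c <->
   (forall f : laurent R, in_Hplus c f -> in_Hplus c (zpow_mul n f))).
Proof.
move=> Hn1; split.
  move=> HS f [m [a Hf]].
  have -> : zpow_mul n f = (fun d => \sum_(k < m) (fun k d => a k * G c n k d) k d).
    apply: functional_extensionality => d; rewrite /zpow_mul Hf /=.
    apply: eq_bigr => k _.
    by rewrite -(Gfull k Hn1 HS).
  apply: inHsum => k; exact: inHZ (inG c n k).
move=> Hcl.
have Hn : Hser c n = (fun d => (d == n%:Z)%:R).
  have E : zpow_mul n (Hser c 0) = Hser c n.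
    apply: Uniq; [exact: Hcl (inHH c 0) | exact: inHH |].
    move=> e; rewrite Hnn /zpow_mul /Hser /=.
    by congr (_%:R); rewrite subr_eq0.
  rewrite -E; apply: functional_extensionality => d; rewrite /zpow_mul /Hser /=.
  by congr (_%:R); rewrite subr_eq0.
split=> // k l Hk Hl.
have E : zpow_mul n (Hser c k) = G c n k.
  apply: Uniq; [exact: Hcl (inHH c k) | exact: inG |].
  by move=> e; rewrite Dnn.
by rewrite XG // E subrr.
Qed.
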